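(* Let $G=(V,E)$ be a $d$-regular graph with $d\ge 1$ that is a UNN, and let $s:E\to\{-1,+1\}$ be any signing. Then the 2-lift $\hat G$ of $G$ with respect to $s$ is a UNN.
   Context: All graphs are finite, simple and undirected. For a vertex $v$, $\mathrm{nb}(v)$ denotes its set of neighbors (a vertex is not its own neighbor). A graph is a unique-neighborhood network (UNN) if distinct vertices have distinct neighborhoods. The 2-lift of $G=(V,E)$ with respect to a signing $s:E\to\{-1,+1\}$ is the graph $\hat G$ with vertex set $\{x_1,x_2 : x\in V\}$ (two copies of each vertex) and, for each edge $\{x,y\}\in E$: the edges $\{x_1,y_1\},\{x_2,y_2\}$ if $s(\{x,y\})=+1$, and the edges $\{x_1,y_2\},\{x_2,y_1\}$ if $s(\{x,y\})=-1$; $\hat G$ has no other edges. *)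

(* Defs.v *)
From mathcomp Require Import all_boot.
Set Implicit Arguments. Unset Strict Implicit. Unset Printing Implicit Defensive.

Definition simple_graph (T : finType) (e : rel T) : Prop :=
  symmetric e /\ irreflexive e.

Definition nb (T : finType) (e : rel T) (v : T) : {set T} := [set u | e v u].

Definition regular (T : finType) (e : rel T) (d : nat) : Prop :=
  forall v : T, #|nb e v| = d.

Definition UNN (T : finType) (e : rel T) : Prop :=
  forall x y : T, x != y -> nb e x != nb e y.

(* A signing s : E -> {-1,+1}, encoded as a symmetric boolean function on
   pairs of vertices (true = +1, false = -1); only its values on edges matter.
   Symmetry makes it a function of the unordered edge {x,y}. *)
Definition signing (T : finType) (s : T -> T -> bool) : Prop :=
  forall x y : T, s x y = s y x.

(* The 2-lift: vertex x_1 is (x, false), x_2 is (x, true).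
   {x_i, y_j} is an edge iff {x,y} in E and (i = j if s = +1, i <> j if s = -1). *)
Definition lift2 (T : finType) (e : rel T) (s : T -> T -> bool) : rel (T * bool) :=
  fun u w => e u.1 w.1 && (if s u.1 w.1 then u.2 == w.2 else u.2 != w.2).

(* Main.v *)
Require Import Defs.
From mathcomp Require Import all_boot.

Theorem lemma5 (T : finType) (e : rel T) (d : nat) (s : T -> T -> bool) :
  simple_graph e -> (1 <= d)%N -> regular e d -> UNN e -> signing s ->
  UNN (lift2 e s).
Proof.
move=> _ d1 reg unn _ [x i] [y j] neq; apply/negP => /eqP Heq.
have mem : forall z b, ((z, b) \in nb (lift2 e s) (x, i)) = ((z, b) \in nb (lift2 e s) (y, j)).
  by move=> z b; rewrite Heq.
have exy : forall z, e x z = e y z.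
  move=> z; apply/idP/idP => H.
  - have := mem z (if s x z then i else ~~ i).
    rewrite !inE /lift2 /= H /=.
    by case: (s x z); case: i {Heq mem neq}; case: (e y z).
  - have := mem z (if s y z then j else ~~ j).
    rewrite !inE /lift2 /= H /=.
    by case: (s y z); case: j {Heq mem neq}; case: (e x z); rewrite /= ?andbF.
have xy : x = y.
  apply/eqP; apply/negPn/negP => /unn /negP; apply; apply/eqP/setP => z.
  by rewrite !inE exy.
subst y.
have ij : i != j by apply: contra neq => /eqP ->.
have : (0 < #|nb e x|)%N by rewrite reg.
case/card_gt0P => z; rewrite inE => exz.
have := mem z (if s x z then i else ~~ i).
rewrite !inE /lift2 /= exz /=.
by case: (s x z); case: i j ij {Heq mem neq} => [] [].
Qed.
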